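(* Under the assumptions (i), (ii), (iii) of the Main Result (including convexity of $L_T$), any point $\hat\theta_T$ with $\nabla L_T(\hat\theta_T)=0$ lies in $\mathcal{B}=\{\hat\theta_T^{\mathrm{NS}}+e:\|e\|_\Sigma\le r\}$.
   Context: Setting: $\ell_1,\dots,\ell_n:\mathbb{R}^d\to\mathbb{R}$ twice continuously differentiable, $T\subseteq[n]$, $L_T=\sum_{i\notin T}\ell_i$ convex, $\hat\theta$ with $\sum_{i=1}^n\nabla\ell_i(\hat\theta)=0$, $H_\theta=\nabla^2L_T(\theta)$, $g=\nabla L_T(\hat\theta)$, $H=H_{\hat\theta}$ invertible, $\hat\theta_T^{\mathrm{NS}}=\hat\theta-H^{-1}g$; $\Sigma$ positive definite, $\|v\|_M=\sqrt{v^\top Mv}$, $r>0$. (i): $\|\Sigma^{1/2}H_\theta^{-1}\Sigma^{1/2}\|_{\mathrm{op}}\le C_{\mathrm{op}}$ for all $\theta\in\mathcal B$. (ii): $\|(H_\theta-H)H^{-1}g\|_{\Sigma^{-1}}\le C_h$ for all $\theta$ on the segment $[\hat\theta,\hat\theta_T^{\mathrm{NS}}]$. (iii): $C_hC_{\mathrm{op}}<r$. *)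

(* Defs.v *)
From HB Require Import structures.
From mathcomp Require Import all_boot all_order all_algebra.
From mathcomp Require Import all_classical all_reals all_analysis.
Set Implicit Arguments. Unset Strict Implicit. Unset Printing Implicit Defensive.
Import Order.TTheory GRing.Theory Num.Theory.
Import numFieldNormedType.Exports.
Local Open Scope ring_scope.
Local Open Scope classical_set_scope.

Section Defs.
Variables (R : realType) (d : nat).
Notation V := 'cV[R]_d.

Definition ebasis (i : 'I_d) : V := delta_mx i 0.

Definition partial (f : V -> R) (i : 'I_d) (x : V) : R := 'D_(ebasis i) f x.

Definition grad (f : V -> R) (x : V) : V := \col_i partial f i x.

Definition hess (f : V -> R) (x : V) : 'M[R]_d :=
  \matrix_(i, j) 'D_(ebasis j) (partial f i) x.

Definition C2 (f : V -> R) : Prop :=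
  (forall x, differentiable f x) /\
  (forall x, differentiable (grad f) x) /\
  (forall i j, continuous (fun x => hess f x i j)).

Definition convex_fun (f : V -> R) : Prop :=
  forall (x y : V) (t : R), 0 <= t <= 1 ->
    f ((1 - t) *: x + t *: y) <= (1 - t) * f x + t * f y.

Definition qform (M : 'M[R]_d) (v : V) : R := ((v^T *m M *m v) 0 0).
Definition mnorm (M : 'M[R]_d) (v : V) : R := Num.sqrt (qform M v).

Definition enorm (v : V) : R := Num.sqrt ((v^T *m v) 0 0).

Definition posdef (M : 'M[R]_d) : Prop :=
  M^T = M /\ forall v : V, v != 0 -> 0 < qform M v.
Definition possemidef (M : 'M[R]_d) : Prop :=
  M^T = M /\ forall v : V, 0 <= qform M v.

Definition is_sqrtm (S Sigma : 'M[R]_d) : Prop :=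
  possemidef S /\ S *m S = Sigma.

Definition opnorm (A : 'M[R]_d) : R :=
  sup [set enorm (A *m v) | v in [set v : V | enorm v <= 1]].

End Defs.

(* Main.v *)
Require Import Defs.
From HB Require Import structures.
From mathcomp Require Import all_boot all_order all_algebra.
From mathcomp Require Import all_classical all_reals all_analysis.
From mathcomp.algebra_tactics Require Import ring lra.
Import Order.TTheory GRing.Theory Num.Theory.
Import numFieldNormedType.Exports.
Local Open Scope ring_scope.
Local Open Scope classical_set_scope.


Section SA.
Variables (R : realType) (d : nat).
Notation V := 'cV[R]_d.
Local Notation eb := (@ebasis R d).

Lemma line_quot (f : V -> R) (p v : V) (t : R) :
  (fun h : R => h^-1 *: (((fun s : R => f (p + s *: v)) \o shift t) (h *: 1) - f (p + t *: v)))
  = (fun h : R => h^-1 *: ((f \o shift (p + t *: v)) (h *: v) - f (p + t *: v))).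
Proof.
apply: funext => h /=; congr (_ *: (f _ - _)).
by rewrite [h *: 1]mulr1 scalerDl addrCA addrA.
Qed.

Lemma line_derivable (f : V -> R) (p v : V) (t : R) :
  derivable (fun s : R => f (p + s *: v)) t 1 <-> derivable f (p + t *: v) v.
Proof. by rewrite /derivable line_quot. Qed.

Lemma line_derive (f : V -> R) (p v : V) (t : R) :
  'D_1 (fun s : R => f (p + s *: v)) t = 'D_v f (p + t *: v).
Proof. by rewrite /derive line_quot. Qed.

Lemma vec_decomp (v : V) : v = \sum_j v j 0 *: eb j.
Proof.
apply/matrixP => i k; rewrite (ord1 k) summxE (bigD1 i) //= big1.
  by rewrite !mxE eqxx /= mulr1 addr0.
by move=> j ji; rewrite !mxE eq_sym (negbTE ji) /= mulr0.
Qed.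

Lemma D_lin (f : V -> R) x w : differentiable f x ->
  'D_w f x = (w^T *m grad f x) 0 0.
Proof.
move=> df; rewrite deriveE // {1}(vec_decomp w) linear_sum /= !mxE.
apply: eq_bigr => j _; rewrite linearZ /= -deriveE // !mxE.
by [].
Qed.


Lemma partialE (f : V -> R) i : partial f i = (fun x => grad f x i 0).
Proof. by apply: funext => x; rewrite /grad mxE. Qed.

Lemma partial_derivable (f : V -> R) i x v :
  differentiable (grad f) x -> derivable (partial f i) x v.
Proof.
move=> dg; rewrite partialE.
by move: (@diff_derivable _ _ _ _ _ v dg) => /derivable_mxP; apply.
Qed.

Lemma partial_differentiable (f : V -> R) i x :
  differentiable (grad f) x -> differentiable (partial f i) x.
Proof.
move=> dg; rewrite partialE.
exact: (differentiable_comp dg (differentiable_coord _ i 0)).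
Qed.

Lemma D_partial (f : V -> R) i x v : differentiable (grad f) x ->
  'D_v (partial f i) x = (hess f x *m v) i 0.
Proof.
move=> dg; rewrite D_lin; last exact: partial_differentiable.
rewrite !mxE; apply: eq_bigr => j _; rewrite !mxE mulrC; congr (_ * _).
Qed.


Lemma D2_line (f : V -> R) (x v w : V) (s : R) :
  (forall y, differentiable f y) -> (forall y, differentiable (grad f) y) ->
  is_derive s 1 (fun t : R => 'D_w f (x + t *: v))
     ((w^T *m hess f (x + s *: v) *m v) 0 0).
Proof.
move=> df dg.
have hk k : is_derive s 1 (w k 0 *: (fun t : R => partial f k (x + t *: v)))
   (w k 0 *: 'D_v (partial f k) (x + s *: v)).
  apply: DeriveDef.
    by apply: derivableZ; apply/line_derivable/partial_derivable.
  by rewrite deriveZ ?line_derive //; apply/line_derivable/partial_derivable.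
have := is_derive_sum hk; rewrite fct_sumE.
have -> : (fun t : R => \sum_(i < d) (w i 0 *: (fun t0 : R => partial f i (x + t0 *: v))) t)
   = (fun t : R => 'D_w f (x + t *: v)).
  apply: funext => t; rewrite D_lin // !mxE; apply: eq_bigr => k _.
  by rewrite !mxE.
move=> H; apply: is_derive_eq H _.
rewrite -mulmxA !mxE; apply: eq_bigr => k _; rewrite D_partial // !mxE.
by [].
Qed.


Lemma mvt0 (F dF : R -> R) (h : R) : 0 < h ->
  (forall t : R, is_derive t 1 F (dF t)) ->
  exists2 c, 0 < c < h & F h - F 0 = dF c * h.
Proof.
move=> h0 dF_.
have [c cin ->] := @MVT R F dF 0 h h0 (fun t _ => dF_ t)
  (derivable_within_continuous (fun t _ => @ex_derive _ _ _ _ _ _ _ (dF_ t))).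
by exists c; [move: cin; rewrite in_itv | rewrite subr0].
Qed.

Lemma line_is_derive (f : V -> R) (p a : V) (t : R) :
  derivable f (p + t *: a) a ->
  is_derive t 1 (fun s : R => f (p + s *: a)) ('D_a f (p + t *: a)).
Proof.
move=> H; apply: DeriveDef; first exact/line_derivable.
by rewrite line_derive.
Qed.

Lemma Delta_mvt (f : V -> R) (x : V) (i j : 'I_d) (h : R) :
  (forall y, differentiable f y) -> (forall y, differentiable (grad f) y) ->
  0 < h -> exists c s, [/\ 0 < c < h, 0 < s < h &
  f (x + h *: eb j + h *: eb i) - f (x + h *: eb i) - (f (x + h *: eb j) - f x)
   = h * h * hess f (x + c *: eb i + s *: eb j) i j].
Proof.
move=> df dg h0.
pose F : R -> R := (fun t : R => f ((x + h *: eb j) + t *: eb i)) - (fun t => f (x + t *: eb i)).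
have dF (t : R) : is_derive t 1 F (partial f i ((x + h *: eb j) + t *: eb i)
                             - partial f i (x + t *: eb i)).
  by apply: is_deriveB; apply: line_is_derive; apply: diff_derivable.
have [c /andP[c0 ch] Fc] := @mvt0 _ _ h h0 dF.
pose G := fun s : R => partial f i ((x + c *: eb i) + s *: eb j).
have dG (s : R) : is_derive s 1 G (hess f ((x + c *: eb i) + s *: eb j) i j).
  have := @line_is_derive (partial f i) (x + c *: eb i) (eb j) s.
  by rewrite /hess mxE; apply; apply: partial_derivable.
have [s /andP[s0 sh] Gs] := @mvt0 _ _ h h0 dG.
exists c, s; split; [by rewrite c0 | by rewrite s0 |].
move: Fc; rewrite /F !fctE !scale0r !addr0 => ->.
move: Gs; rewrite /G !scale0r !addr0 [x + h *: _ + c *: _]addrAC => ->.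
by rewrite -mulrA mulrC.
Qed.


Lemma cont_ball (F : V -> R) (x : V) (e : R) : continuous F -> 0 < e ->
  exists2 δ, 0 < δ & forall y, `|x - y| < δ -> `|F x - F y| < e.
Proof.
move=> cF e0; have := cF x; move/cvgrPdist_lt => /(_ e e0) /nbhs_ballP [δ δ0 Hb].
by exists δ => // y xy; apply: Hb; rewrite -ball_normE.
Qed.

Lemma norm_shift2 (x a b : V) : `|x - (x + a + b)| <= `|a| + `|b|.
Proof.
by rewrite -addrA opprD addrA subrr sub0r normrN ler_normD.
Qed.

Lemma swap4 (a b c e : R) : a - b - (c - e) = a - c - (b - e).
Proof. by ring. Qed.

Lemma final_ineq (A B P Q : R) : 0 < `|A - B| -> P = Q ->
  `|A - P| < `|A - B| / 2 -> `|B - Q| < `|A - B| / 2 -> False.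
Proof.
move=> e0 -> A1 A2.
have : `|A - B| < `|A - B| / 2 + `|A - B| / 2.
  apply: le_lt_trans (ltrD A1 A2).
  by rewrite (le_trans (ler_distD Q _ _)) // [`|Q - B|]distrC.
by rewrite -splitr ltxx.
Qed.

Lemma schwarz (f : V -> R) (x : V) (i j : 'I_d) :
  (forall y, differentiable f y) -> (forall y, differentiable (grad f) y) ->
  (forall i j, continuous (fun x => hess f x i j)) ->
  hess f x i j = hess f x j i.
Proof.
move=> df dg hc.
apply/eqP; rewrite -subr_eq0 -normr_eq0; apply/eqP.
apply/le_anti; rewrite normr_ge0 andbT; apply/negPn/negP; rewrite -ltNge => eps0.
set e := `|_| in eps0.
have e2 : 0 < e / 2 by rewrite divr_gt0.
have [d1 d10 H1] := @cont_ball _ x _ (hc i j) e2.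
have [d2 d20 H2] := @cont_ball _ x _ (hc j i) e2.
pose K := `|eb i| + `|eb j| + 1.
have K0 : 0 < K by rewrite /K ltr_wpDl // addr_ge0.
pose δ := Num.min d1 d2.
have δ0 : 0 < δ by rewrite lt_min d10 d20.
have δ1 : δ <= d1 by rewrite ge_min lexx.
have δ2 : δ <= d2 by rewrite ge_min lexx orbT.
pose h := δ / (2 * K).
have h0 : 0 < h by rewrite divr_gt0 // mulr_gt0.
have hKe : h * K = δ / 2.
  by rewrite /h; field; rewrite gt_eqF.
have hK : forall c s, 0 < c < h -> 0 < s < h -> forall a b : 'I_d,
    `|eb a| + `|eb b| = `|eb i| + `|eb j| ->
    `|x - (x + c *: eb a + s *: eb b)| < δ.
  move=> c s /andP[c0 ch] /andP[s0 sh] a b Eab.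
  apply: le_lt_trans (norm_shift2 _ _ _) _.
  rewrite !normrZ !gtr0_norm //.
  have Ha : c * `|eb a| <= h * `|eb a| by rewrite ler_wpM2r // ltW.
  have Hb : s * `|eb b| <= h * `|eb b| by rewrite ler_wpM2r // ltW.
  apply: le_lt_trans (lerD Ha Hb) _; rewrite -mulrDr Eab.
  apply: (@le_lt_trans _ _ (h * K)).
    by apply: ler_wpM2l; [exact: ltW | rewrite /K lerDl].
  by rewrite hKe ltr_pdivrMr // ltr_pMr // ltr1n.
have [c [s [ch sh E1]]] := @Delta_mvt f x i j h df dg h0.
have [c' [s' [ch' sh' E2]]] := @Delta_mvt f x j i h df dg h0.
have E : hess f (x + c *: eb i + s *: eb j) i j = hess f (x + c' *: eb j + s' *: eb i) j i.
  apply: (@mulfI _ (h * h)); first by rewrite mulf_neq0 // gt_eqF.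
  rewrite -E1 -E2 [x + h *: eb i + h *: eb j]addrAC.
  by rewrite swap4.
have := H1 _ (lt_le_trans (hK _ _ ch sh i j erefl) δ1).
have := H2 _ (lt_le_trans (hK _ _ ch' sh' j i (addrC _ _)) δ2).
move=> A2 A1; have := @final_ineq _ _ _ _ eps0 E.
by apply.
Qed.


Lemma hessE (F : V -> R) x i j : hess F x i j = 'D_(eb j) (partial F i) x.
Proof. by rewrite mxE. Qed.

Lemma gradE (F : V -> R) x i k : grad F x i k = partial F i x.
Proof. by rewrite mxE. Qed.

Lemma deriveD' (f g : V -> R) (x v : V) : derivable f x v -> derivable g x v ->
  'D_v (fun y => f y + g y) x = 'D_v f x + 'D_v g x.
Proof. by move=> df dg; rewrite -(deriveD df dg). Qed.

Lemma grad_add (f g : V -> R) x : (forall y, differentiable f y) -> (forall y, differentiable g y) ->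
  grad (fun y => f y + g y) x = grad f x + grad g x.
Proof.
move=> df dg; apply/matrixP => i k; rewrite !mxE /partial.
by rewrite deriveD' //; apply: diff_derivable.
Qed.

Lemma C2_add (f g : V -> R) : C2 f -> C2 g -> C2 (fun y => f y + g y).
Proof.
move=> [df [dgf hf]] [dg [dgg hg]].
have ga : grad (fun y => f y + g y) = (fun x => grad f x + grad g x).
  by apply: funext => x; rewrite grad_add.
have pa i : partial (fun y => f y + g y) i = (fun x => partial f i x + partial g i x).
  by apply: funext => x; rewrite /partial deriveD' //; apply: diff_derivable.
have ha x i j : hess (fun y => f y + g y) x i j = hess f x i j + hess g x i j.
  rewrite hessE [hess f x i j]hessE [hess g x i j]hessE pa deriveD' //;
  exact: partial_derivable.
split; first by move=> x; have := differentiableD (df x) (dg x).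
split; first by rewrite ga => x; have := differentiableD (dgf x) (dgg x).
move=> i j; have -> : (fun x => hess (fun y => f y + g y) x i j) =
  (fun x => hess f x i j + hess g x i j).
  by apply: funext => x; exact: ha.
by move=> x; have := continuousD (hf i j x) (hg i j x).
Qed.

Lemma C2_0 : C2 (fun _ : V => (0 : R)).
Proof.
have g0 : grad (fun _ : V => (0 : R)) = (fun _ => 0).
  by apply: funext => x; apply/matrixP => i k; rewrite !mxE /partial derive_cst.
have p0 i : partial (fun _ : V => (0 : R)) i = (fun _ => 0).
  by apply: funext => x; rewrite /partial derive_cst.
split; first by move=> x; exact: differentiable_cst.
split; first by rewrite g0 => x; exact: differentiable_cst.
move=> i j; have -> : (fun x => hess (fun _ : V => (0 : R)) x i j) = (fun _ => 0).
  by apply: funext => x; rewrite hessE p0 derive_cst.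
exact: cst_continuous.
Qed.

Lemma C2_ext (f g : V -> R) : (forall x, f x = g x) -> C2 f -> C2 g.
Proof. by move=> E; have -> : g = f by apply: funext => x; rewrite E. Qed.

Lemma C2_sum (I : eqType) (r : seq I) (P : pred I) (F : I -> V -> R) :
  (forall i, C2 (F i)) -> C2 (fun x => \sum_(i <- r | P i) F i x).
Proof.
move=> HF; elim: r => [|a r IH].
  by apply: (@C2_ext _ _ _ C2_0) => x; rewrite big_nil.
case Pa: (P a).
  apply: (@C2_ext _ _ _ (C2_add _ _ (HF a) IH)) => x /=.
  by rewrite big_cons Pa.
by apply: (@C2_ext _ _ _ IH) => x /=; rewrite big_cons Pa.
Qed.

End SA.

Section SB.
Variables (R : realType) (d : nat).
Notation V := 'cV[R]_d.
Local Notation eb := (@ebasis R d).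

Lemma quot_le (a b c h : R) : 0 < h -> a <= (1 - h) * b + h * c ->
  h^-1 *: (a - b) <= c - b.
Proof.
move=> h0 H; rewrite [_ *: _]mulrC ler_pdivrMr //.
lra.
Qed.

Lemma tangent (f : V -> R) (x y : V) : convex_fun f -> differentiable f x ->
  'D_(y - x) f x <= f y - f x.
Proof.
move=> cf dfx.
have cv := @diff_derivable _ _ _ _ _ (y - x) dfx.
set q := (fun h : R => h^-1 *: ((f \o shift x) (h *: (y - x)) - f x)).
have Hr : q @ 0^'+ --> 'D_(y - x) f x.
  move=> A /cv /nbhs_ballP [_ /posnumP[e] xe_A].
  exists e%:num => //= z xe_z; rewrite lt_def => /andP [zne _]; exact: xe_A.
rewrite -(cvg_lim _ Hr) //.
apply: limr_le; first by apply/cvg_ex; eexists; exact: Hr.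
near=> h.
have h0 : 0 < h by near: h; exact: nbhs_right_gt.
have h1 : h <= 1 by near: h; apply: nbhs_right_ltW; exact: ltr01.
rewrite /q /=.
have -> : h *: (y - x) + x = (1 - h) *: x + h *: y.
  by rewrite scalerBr scalerBl scale1r addrC addrA [LHS]addrAC.
have := cf x y h; rewrite h1 (ltW h0) => /(_ isT) H.
exact: quot_le.
Unshelve. all: end_near.
Qed.


Lemma D_scale (f : V -> R) (x v : V) (k : R) : differentiable f x ->
  'D_(k *: v) f x = k * 'D_v f x.
Proof. by move=> df; rewrite !deriveE // linearZ. Qed.

Lemma diffpts (x v : V) (s t : R) : (x + t *: v) - (x + s *: v) = (t - s) *: v.
Proof. by rewrite opprD addrACA subrr add0r scalerBl. Qed.

Lemma mono_aux (a b s t F1 F2 : R) : s < t -> (t - s) * a <= F2 - F1 ->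
  (s - t) * b <= F1 - F2 -> a <= b.
Proof.
move=> st H1 H2.
have : (t - s) * (a - b) <= 0 by lra.
by rewrite pmulr_rle0 ?subr_gt0 // subr_le0.
Qed.

Lemma Dmono (f : V -> R) (x v : V) (s t : R) : convex_fun f ->
  (forall y, differentiable f y) -> s <= t ->
  'D_v f (x + s *: v) <= 'D_v f (x + t *: v).
Proof.
move=> cf df; rewrite le_eqVlt => /predU1P [-> // | st].
have T1 := tangent f (x + s *: v) (x + t *: v) cf (df _).
have T2 := tangent f (x + t *: v) (x + s *: v) cf (df _).
rewrite diffpts D_scale // in T1.
rewrite diffpts D_scale // in T2.
exact: mono_aux st T1 T2.
Qed.

Lemma psd (f : V -> R) (x v : V) : C2 f -> convex_fun f ->
  0 <= (v^T *m hess f x *m v) 0 0.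
Proof.
move=> [df [dg hc]] cf.
have ID := @D2_line R d f x v v 0 df dg.
have -> : (v^T *m hess f x *m v) 0 0 = 'D_1 (fun t : R => 'D_v f (x + t *: v)) 0.
  by rewrite (@derive_val _ _ _ _ _ _ _ ID) scale0r addr0.
rewrite /derive; apply: limr_ge; first exact: (@ex_derive _ _ _ _ _ _ _ ID).
near=> h.
have h0 : h != 0 by near: h; exact: nbhs_dnbhs_neq.
rewrite /= [h *: 1]mulr1 addr0 scale0r addr0.
case: (ltrgtP h 0) h0 => // hs _.
- apply: mulr_le0; first by rewrite invr_le0 ltW.
  have := Dmono f x v h 0 cf df (ltW hs); rewrite scale0r addr0 => H.
  by rewrite subr_le0.
- apply: mulr_ge0; first by rewrite invr_ge0 ltW.
  have := Dmono f x v 0 h cf df (ltW hs); rewrite scale0r addr0 => H.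
  by rewrite subr_ge0.
Unshelve. all: end_near.
Qed.

End SB.

Section SC.
Variables (R : realType) (d : nat).
Notation V := 'cV[R]_d.

Definition bil (M : 'M[R]_d) (u w : V) : R := (u^T *m M *m w) 0 0.

Lemma bil_sym M u w : M^T = M -> bil M u w = bil M w u.
Proof.
move=> EM; rewrite /bil.
transitivity ((u^T *m M *m w)^T 0 0); first by rewrite [RHS]mxE.
by rewrite !trmx_mul trmxK EM mulmxA.
Qed.

Lemma bilDl M u1 u2 w : bil M (u1 + u2) w = bil M u1 w + bil M u2 w.
Proof. by rewrite /bil linearD /= !mulmxDl mxE. Qed.

Lemma bilDr M u w1 w2 : bil M u (w1 + w2) = bil M u w1 + bil M u w2.
Proof. by rewrite /bil mulmxDr mxE. Qed.

Lemma bilZl M k u w : bil M (k *: u) w = k * bil M u w.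
Proof. by rewrite /bil linearZ /= -!scalemxAl mxE. Qed.

Lemma bilZr M k u w : bil M u (k *: w) = k * bil M u w.
Proof. by rewrite /bil -scalemxAr mxE. Qed.

Lemma expand_aux (a b b' c t : R) : b' = b ->
  a + t * b + (t * b' + t * (t * c)) = a + 2 * b * t + c * t ^+ 2.
Proof. by move=> ->; ring. Qed.

Lemma CS_real (a b c : R) : 0 <= c -> (forall t, 0 <= a + 2 * b * t + c * t ^+ 2) ->
  b ^+ 2 <= a * c.
Proof.
move=> c0 H; case: (ltrgtP c 0) c0 => // [cpos _ | ceq _]; last subst c.
  have := H (- b / c).
  have -> : a + 2 * b * (- b / c) + c * (- b / c) ^+ 2 = (a * c - b ^+ 2) / c.
    by field; rewrite gt_eqF.
  by rewrite pmulr_lge0 ?invr_gt0 // subr_ge0.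
case: (eqVneq b 0) => [-> | bn0]; first by rewrite expr0n /= mulr0.
have := H (- (a + 1) / (2 * b)).
have -> : a + 2 * b * (- (a + 1) / (2 * b)) + 0 * (- (a + 1) / (2 * b)) ^+ 2 = -1.
  by field; rewrite bn0 /=.
by rewrite ler0N1.
Qed.

Lemma CS_mat (M : 'M[R]_d) (x y : V) : M^T = M -> (forall z, 0 <= bil M z z) ->
  (bil M x y) ^+ 2 <= bil M x x * bil M y y.
Proof.
move=> EM H; apply: CS_real => // t.
have := H (x + t *: y).
by rewrite !bilDl !bilDr !bilZl !bilZr (expand_aux _ _ _ _ _ (bil_sym _ _ _ EM)).
Qed.


Lemma sqnorm_sum (u : V) : (u^T *m u) 0 0 = \sum_i u i 0 ^+ 2.
Proof. by rewrite mxE; apply: eq_bigr => i _; rewrite mxE expr2. Qed.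

Lemma sqnorm_ge0 (u : V) : 0 <= (u^T *m u) 0 0.
Proof. by rewrite sqnorm_sum sumr_ge0 // => i _; rewrite sqr_ge0. Qed.

Lemma enorm_ge0 (u : V) : 0 <= enorm u.
Proof. exact: sqrtr_ge0. Qed.

Lemma enorm_sqr (u : V) : enorm u ^+ 2 = (u^T *m u) 0 0.
Proof. by rewrite /enorm sqr_sqrtr // sqnorm_ge0. Qed.

Lemma entry_le_enorm (u : V) i : `|u i 0| <= enorm u.
Proof.
rewrite /enorm -sqrtr_sqr ler_sqrt ?sqnorm_ge0 // sqnorm_sum (bigD1 i) //=.
by rewrite lerDl sumr_ge0 // => j _; rewrite sqr_ge0.
Qed.

Lemma enorm_scale (k : R) (u : V) : enorm (k *: u) = `|k| * enorm u.
Proof.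
rewrite /enorm linearZ /= linearZ /= -scalemxAl scalerA mxE -expr2.
by rewrite sqrtrM ?sqr_ge0 // sqrtr_sqr.
Qed.

Lemma enorm0_eq0 (u : V) : enorm u = 0 -> u = 0.
Proof.
move=> E; apply/matrixP => i k; rewrite (ord1 k) mxE.
by apply/eqP; rewrite -normr_le0 -E entry_le_enorm.
Qed.

Definition rowbound (A : 'M[R]_d) : R := Num.sqrt (\sum_i (\sum_j `|A i j|) ^+ 2).

Lemma enorm_bound (A : 'M[R]_d) (v : V) : enorm v <= 1 -> enorm (A *m v) <= rowbound A.
Proof.
move=> v1; rewrite /enorm /rowbound ler_sqrt; last first.
  by rewrite sumr_ge0 // => i _; rewrite sqr_ge0.
rewrite sqnorm_sum; apply: ler_sum => i _.
have Hi : `|(A *m v) i 0| <= \sum_j `|A i j|.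
  rewrite mxE; apply: le_trans (ler_norm_sum _ _ _) _; apply: ler_sum => j _.
  rewrite normrM -[X in _ <= X]mulr1 ler_wpM2l //.
  exact: le_trans (entry_le_enorm v j) v1.
rewrite -(real_normK (num_real ((A *m v) i 0))) !expr2.
by apply: ler_pM => //; apply: le_trans Hi.
Qed.

Lemma opnorm_bound (A : 'M[R]_d) (u : V) : enorm (A *m u) <= opnorm A * enorm u.
Proof.
have ub : has_ubound [set enorm (A *m v) | v in [set v : V | enorm v <= 1]].
  by exists (rowbound A) => _ [v v1 <-]; exact: enorm_bound.
have H v : enorm v <= 1 -> enorm (A *m v) <= opnorm A.
  by move=> v1; apply: (ub_le_sup ub); exists v.
case: (eqVneq (enorm u) 0) => [/enorm0_eq0 -> | u0].
  have e0 : enorm (0 : V) = 0 by rewrite -(scale0r (0 : V)) enorm_scale normr0 mul0r.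
  by rewrite mulmx0 e0 mulr0.
have eu : 0 < enorm u by rewrite lt_def u0 enorm_ge0.
have := H ((enorm u)^-1 *: u).
rewrite enorm_scale ger0_norm ?invr_ge0 ?enorm_ge0 // mulVf // lexx => /(_ isT).
rewrite -scalemxAr enorm_scale ger0_norm ?invr_ge0 ?enorm_ge0 //.
move=> H'; have := ler_wpM2r (ltW eu) H'.
by rewrite mulrAC mulVf // mul1r.
Qed.


Lemma posdef_unit (M : 'M[R]_d) : posdef M -> M \in unitmx.
Proof.
move=> [_ H]; rewrite unitmxE unitfE; apply/negP => /det0P [v v0 vM].
have := H v^T; rewrite trmx_eq0 v0 => /(_ isT).
by rewrite /qform trmxK vM mul0mx !mxE ltxx.
Qed.

Lemma posdef_psd (M : 'M[R]_d) z : posdef M -> 0 <= bil M z z.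
Proof.
move=> [_ H]; case: (eqVneq z 0) => [-> | z0].
  by rewrite /bil mulmx0 mxE.
exact: ltW (H z z0).
Qed.

Lemma bil_abs M x y : M^T = M -> (forall z, 0 <= bil M z z) ->
  `|bil M x y| <= mnorm M x * mnorm M y.
Proof.
move=> EM H; rewrite /mnorm /qform -/(bil M x x) -/(bil M y y).
rewrite -sqrtr_sqr -sqrtrM // ler_sqrt ?mulr_ge0 //.
exact: CS_mat.
Qed.

Lemma sigma_cs (Sg : 'M[R]_d) (w z : V) : posdef Sg ->
  `|(w^T *m z) 0 0| <= mnorm Sg w * mnorm (invmx Sg) z.
Proof.
move=> pd; have U := posdef_unit _ pd; have [ES _] := pd.
have E1 : bil Sg w (invmx Sg *m z) = (w^T *m z) 0 0.
  by rewrite /bil mulmxA -(mulmxA w^T) mulmxV // mulmx1.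
have E2 : mnorm Sg (invmx Sg *m z) = mnorm (invmx Sg) z.
  rewrite /mnorm /qform trmx_mul trmx_inv ES.
  by rewrite -!mulmxA (mulmxA Sg) mulmxV // mul1mx.
rewrite -E1 -E2; apply: bil_abs => // u; exact: posdef_psd _ _ pd.
Qed.

Lemma mnorm1 (u : V) : mnorm 1%:M u = enorm u.
Proof. by rewrite /mnorm /qform mulmx1. Qed.

Lemma hess_cs (Hm S Sg : 'M[R]_d) (C : R) (w : V) : Hm^T = Hm ->
  (forall z, 0 <= bil Hm z z) -> Hm \in unitmx -> is_sqrtm S Sg ->
  opnorm (S *m invmx Hm *m S) <= C ->
  qform Sg w ^+ 2 <= bil Hm w w * (C * qform Sg w).
Proof.
move=> EH psdH UH [[ES _] SS] opC.
set y := invmx Hm *m (Sg *m w).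
have E1 : bil Hm w y = qform Sg w.
  by rewrite /bil /y !mulmxA -(mulmxA w^T Hm) mulmxV // mulmx1.
have ESg : Sg^T = Sg by rewrite -SS trmx_mul ES.
set A := S *m invmx Hm *m S.
have E2 : bil Hm y y = bil 1%:M (S *m w) (A *m (S *m w)).
  rewrite /bil /y /A !trmx_mul trmx_inv EH ESg ES mulmx1 -SS.
  rewrite -!mulmxA; congr (_ 0 0); congr (_ *m _).
  by rewrite !mulmxA mulmxKV // -!mulmxA.
have E3 : qform Sg w = enorm (S *m w) ^+ 2.
  by rewrite enorm_sqr /qform -SS trmx_mul ES !mulmxA.
have Hy : bil Hm y y <= C * qform Sg w.
  rewrite E2; apply: le_trans (ler_norm _) _.
  apply: le_trans (bil_abs _ _ _ _ _) _.
  - by rewrite trmx1.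
  - by move=> z; rewrite /bil mulmx1 sqnorm_ge0.
  rewrite !mnorm1 E3 expr2 mulrA [C * _]mulrC -mulrA.
  rewrite ler_wpM2l ?enorm_ge0 //.
  apply: le_trans (opnorm_bound A (S *m w)) _.
  by rewrite ler_wpM2r ?enorm_ge0.
have := CS_mat _ w y EH psdH; rewrite E1 => H1; apply: le_trans H1 _.
by apply: ler_wpM2l.
Qed.

Lemma mnorm_scale (M : 'M[R]_d) (k : R) (u : V) : mnorm M (k *: u) = `|k| * mnorm M u.
Proof.
rewrite /mnorm /qform linearZ /= linearZ /= -scalemxAl -scalemxAl scalerA mxE -expr2.
by rewrite sqrtrM ?sqr_ge0 // sqrtr_sqr.
Qed.

Lemma final_real (ρ r s1 q b D0 Ds1 Cop Ch : R) : 0 < ρ -> s1 * ρ = r -> q = ρ ^+ 2 ->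
  q ^+ 2 <= b * (Cop * q) -> 0 <= b -> Ds1 - D0 = b * s1 -> - (ρ * Ch) <= D0 ->
  Ds1 <= 0 -> Ch * Cop < r -> 0 < s1 -> False.
Proof.
move=> ρ0 Er Eq Hq b0 ED D0ge Ds10 Hr s10.
have q0 : 0 < q by rewrite Eq exprn_gt0.
have Hq' : q <= b * Cop.
  by move: Hq; rewrite expr2 mulrA [b * Cop * q]mulrC ler_pM2l // mulrC.
have Cop0 : 0 < Cop.
  rewrite ltNge; apply/negP => Cn.
  have : b * Cop <= 0 by rewrite mulr_ge0_le0.
  lra.
have H1 : Cop * Ds1 = Cop * D0 + Cop * b * s1 by rewrite -mulrA -mulrDr -ED; ring.
have H2 : Cop * D0 >= - (ρ * Ch * Cop).
  have := ler_wpM2l (ltW Cop0) D0ge; lra.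
have H3 : Cop * b * s1 >= q * s1.
  by apply: ler_wpM2r; [exact: ltW | rewrite mulrC].
have H4 : q * s1 = ρ * r by rewrite Eq -Er; ring.
have H5 : Cop * Ds1 <= 0 by apply: mulr_ge0_le0 => //; exact: ltW.
have H6 : 0 < ρ * (r - Ch * Cop) by rewrite mulr_gt0 // subr_gt0.
lra.
Qed.

Lemma trE (A : 'M[R]_d) i j : A^T i j = A j i.
Proof. by rewrite mxE. Qed.

End SC.

Lemma subKN (R : realType) (d : nat) (a x : 'cV[R]_d) : (a - x) - a = - x.
Proof. by rewrite addrAC subrr add0r. Qed.

Lemma Ez_lem (R : realType) (d : nat) (w g : 'cV[R]_d) (Ht H : 'M[R]_d) :
  H \in unitmx -> (w^T *m ((Ht - H) *m invmx H *m g)) 0 0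
    = (w^T *m Ht *m (invmx H *m g)) 0 0 - (w^T *m g) 0 0.
Proof.
move=> U; rewrite mulmxBl mulmxV // mulmxBl mul1mx mulmxBr [LHS]mxE !mulmxA.
by congr (_ + _); rewrite [LHS]mxE.
Qed.

Lemma Ev_lem (R : realType) (d : nat) (w x : 'cV[R]_d) (A : 'M[R]_d) :
  (w^T *m A *m (- x)) 0 0 = - (w^T *m A *m x) 0 0.
Proof. by rewrite mulmxN mxE. Qed.

Theorem mainTheorem3 (R : realType) (d n : nat)
    (ell : 'I_n -> 'cV[R]_d -> R) (T : {set 'I_n})
    (thetahat : 'cV[R]_d) (Sigma SigmaHalf : 'M[R]_d) (r C_op C_h : R) :
  let L_T := fun theta : 'cV[R]_d => \sum_(i < n | i \notin T) ell i theta in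
  let H_ := fun theta : 'cV[R]_d => hess L_T theta in
  let g := grad L_T thetahat in
  let H := H_ thetahat in
  let thetaNS := thetahat - invmx H *m g in
  let B := [set theta : 'cV[R]_d | mnorm Sigma (theta - thetaNS) <= r] in
  (forall i, C2 (ell i)) ->
  convex_fun L_T ->
  \sum_(i < n) grad (ell i) thetahat = 0 ->
  H \in unitmx ->
  posdef Sigma ->
  is_sqrtm SigmaHalf Sigma ->
  0 < r ->
  (* (i) *)
  (forall theta, theta \in B ->
     H_ theta \in unitmx /\
     opnorm (SigmaHalf *m invmx (H_ theta) *m SigmaHalf) <= C_op) ->
  (* (ii) *)
  (forall t : R, 0 <= t <= 1 ->
     let theta := thetahat + t *: (thetaNS - thetahat) in
     mnorm (invmx Sigma) ((H_ theta - H) *m invmx H *m g) <= C_h) ->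
  (* (iii) *)
  C_h * C_op < r ->
  forall thetaT : 'cV[R]_d, grad L_T thetaT = 0 -> thetaT \in B.
Proof.
move=> L_T H_ g H thetaNS B Cell cvx _ Hunit pdS sqS r0 Hi Hii Hiii thetaT gT0.
have C2L : C2 L_T := @C2_sum R d _ (index_enum _) (fun i => i \notin T) ell Cell.
clearbody L_T.
have [dL [dgL hcL]] := C2L.
have symH th : (H_ th)^T = H_ th.
  by apply/matrixP => i j; rewrite trE; apply: schwarz.
have psdH th (z : 'cV[R]_d) : 0 <= @bil R d (H_ th) z z by exact: psd.
apply: mem_set; rewrite /B /=.
rewrite leNgt; apply/negP => Hrho.
set w := thetaT - thetaNS in Hrho *.
set rho := mnorm Sigma w in Hrho.
have rho0 : 0 < rho by apply: lt_trans r0 Hrho.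
have q_eq : qform Sigma w = rho ^+ 2.
  by rewrite /rho /mnorm sqr_sqrtr //; exact: (@posdef_psd R d Sigma w pdS).
set s1 := r / rho.
have s10 : 0 < s1 by rewrite divr_gt0.
have s11 : s1 < 1 by rewrite ltr_pdivrMr // mul1r.
have s1r : s1 * rho = r by rewrite /s1 divfK // gt_eqF.
have inB tau : 0 <= tau <= s1 -> thetaNS + tau *: w \in B.
  move=> /andP[t0 t1]; apply: mem_set; rewrite /B /=.
  rewrite [thetaNS + _]addrC addrK mnorm_scale ger0_norm // -s1r.
  by apply: ler_wpM2r => //; exact: ltW.
have eT : thetaT = thetaNS + 1 *: w by rewrite scale1r /w addrC subrK.
have DP1 : 'D_w L_T (thetaNS + s1 *: w) <= 0.
  have T1 := @tangent R d L_T (thetaNS + s1 *: w) (thetaNS + 1 *: w) cvx (dL _).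
  have T2 := @tangent R d L_T (thetaNS + 1 *: w) (thetaNS + s1 *: w) cvx (dL _).
  rewrite diffpts D_scale // in T1.
  rewrite D_lin // -eT gT0 mulmx0 mxE in T2.
  rewrite -eT in T1.
  have : (1 - s1) * 'D_w L_T (thetaNS + s1 *: w) <= 0 by lra.
  by rewrite pmulr_rle0 // subr_gt0.
have [tau /andP[tau0 taus1] Etau] := @mvt0 R
  (fun t => 'D_w L_T (thetaNS + t *: w))
  (fun t => (w^T *m hess L_T (thetaNS + t *: w) *m w) 0 0) s1 s10
  (fun t => @D2_line R d L_T thetaNS w w t dL dgL).
have inBt : thetaNS + tau *: w \in B by apply: inB; rewrite !ltW.
have [Utau Optau] := Hi _ inBt.
have CSt := @hess_cs R d (H_ (thetaNS + tau *: w)) SigmaHalf Sigma C_op w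
  (symH _) (psdH _) Utau sqS Optau.
have b0 := psdH (thetaNS + tau *: w) w.
set u := thetaNS - thetahat in Hii.
have [tau' /andP[t'0 t'1] Etau'] := @mvt0 R
  (fun t => 'D_w L_T (thetahat + t *: u))
  (fun t => (w^T *m hess L_T (thetahat + t *: u) *m u) 0 0) 1 ltr01
  (fun t => @D2_line R d L_T thetahat u w t dL dgL).
have E1 : thetahat + 1 *: u = thetaNS + 0 *: w.
  by rewrite scale1r scale0r addr0 /u addrC subrK.
move: Etau'; rewrite /= E1 => Etau'.
move: Etau Etau'; rewrite /= !scale0r !addr0 (@D_lin R d L_T thetahat w (dL _)) => Etau Etau'.
have t'01 : 0 <= tau' <= 1 by rewrite !ltW.
have Hz := Hii tau' t'01; rewrite /= in Hz.
set Ht := H_ (thetahat + tau' *: u) in Hz.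
set X := invmx H *m g.
have Eu : u = - X := subKN _ _ thetahat X.
have Ez : (w^T *m ((Ht - H) *m invmx H *m g)) 0 0
    = (w^T *m Ht *m X) 0 0 - (w^T *m g) 0 0 := Ez_lem _ _ w g Ht H Hunit.
have Ev := Ev_lem _ _ w X Ht.
rewrite -Eu in Ev.
rewrite -/Ht Ev mulr1 in Etau'.
have sc := @sigma_cs R d Sigma w ((Ht - H) *m invmx H *m g) pdS.
rewrite Ez in sc.
have h3 := ler_wpM2l (ltW rho0) Hz.
have h4 := ler_norm ((w^T *m Ht *m X) 0 0 - (w^T *m g) 0 0).
have D0ge : - (rho * C_h) <= 'D_w L_T thetaNS.
  rewrite -/rho in sc; lra.
exact: (@final_real R rho r s1 (qform Sigma w) (@bil R d (H_ (thetaNS + tau *: w)) w w)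
   ('D_w L_T thetaNS) ('D_w L_T (thetaNS + s1 *: w)) C_op C_h
   rho0 s1r q_eq CSt b0 Etau D0ge DP1 Hiii s10).
Qed.
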